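(* Let $(V,g)$ be a $4$-dimensional oriented Euclidean vector space and let $R \in \operatorname{Sym}^2_B(\Lambda^2 V)$ be Einstein. Denote by $R_\pm$ the restriction of $R$ to $\Lambda^\pm V$ and by $L_\pm$ the orthogonal projection of $L \in \Lambda^2 V$ onto $\Lambda^\pm V$. Then $$ |LR|^2 = |L_+ R_+|^2 + |L_- R_-|^2 \quad \text{for all } L \in \Lambda^2 V. $$ In particular, suppose $e_1,\ldots,e_4$ is an oriented orthonormal basis of $V$ such that the orthonormal basis $\Xi_1 = \frac{1}{\sqrt 2}(e_1\wedge e_2 + e_3 \wedge e_4)$, $\Xi_2 = \frac{1}{\sqrt 2}(e_1\wedge e_3 - e_2 \wedge e_4)$, $\Xi_3 = \frac{1}{\sqrt 2}(e_1\wedge e_4 + e_2 \wedge e_3)$ of $\Lambda^+ V$ and $\Xi_4 = \frac{1}{\sqrt 2}(e_1\wedge e_2 - e_3 \wedge e_4)$, $\Xi_5 = \frac{1}{\sqrt 2}(e_1\wedge e_3 + e_2 \wedge e_4)$, $\Xi_6 = \frac{1}{\sqrt 2}(e_1\wedge e_4 - e_2 \wedge e_3)$ of $\Lambda^- V$ diagonalizes $R$, with $R(\Xi_\alpha,\cdot) = \lambda_\alpha g(\Xi_\alpha,\cdot)$. If $L = \sum_{\alpha=1}^6 a_\alpha \Xi_\alpha$, then $$ |LR|^2 = 4 \sum_{\gamma=1}^6 a_\gamma^2 (\lambda_\alpha - \lambda_\beta)^2 \leq 4(\lambda_{\max} - \lambda_{\min})^2 |L|^2, $$ where for each $\gamma$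 the indices $\alpha < \beta$ are such that $\{\alpha,\beta,\gamma\} = \{1,2,3\}$ or $\{4,5,6\}$.
   Context: $\mathfrak{so}(V)$ is identified with $\Lambda^2 V$ via $(X \wedge Y)(Z) = g(X,Z)Y - g(Y,Z)X$; $\Lambda^2 V$ has the inner product making $\{e_i\wedge e_j\}_{i<j}$ orthonormal. $\operatorname{Sym}^2_B(\Lambda^2 V)$ is the space of symmetric bilinear forms $R$ on $\Lambda^2 V$ whose associated tensor $\operatorname{Rm}(x,y,z,w) = R(x\wedge y, z\wedge w)$ satisfies the first Bianchi identity; $R$ is Einstein if $\operatorname{Ric}(Y,W) = \sum_i \operatorname{Rm}(Y,e_i,W,e_i)$ is a multiple of $g$. $\Lambda^\pm V$ are the $\pm 1$ eigenspaces of the Hodge star. $L$ acts on $\Lambda^2 V$ by $L(x\wedge y) = Lx\wedge y + x\wedge Ly$ (this preserves $\Lambda^\pm V$ for $L \in \Lambda^\pm V$), and on symmetric bilinear forms $S$ on $\Lambda^2 V$ (or on $\Lambda^\pm V$) by $(LS)(\xi,\eta) = -S(L\xi,\eta) - S(\xi,L\eta)$; norms of such forms are $|S|^2 = \sum_{\alpha,\beta} S(\Xi_\alpha,\Xi_\beta)^2$ over an orthonormal basis, and $\lambda_{\max},\lambda_{\min}$ are the largest and smallest eigenvalues of $R$. *)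

(* Defs.v *)
(* Model: (V,g) = column vectors 'cV[K]_4 over a real closed
   field K with the standard dot product and the standard orientation;
   Lambda^2 V = skewsym-symmetric 4x4 matrices, X /\ Y being the endomorphism
   Z |-> g(X,Z) Y - g(Y,Z) X. *)
From HB Require Import structures.
From mathcomp Require Import all_boot all_order all_algebra.
Set Implicit Arguments. Unset Strict Implicit. Unset Printing Implicit Defensive.
Import Order.TTheory GRing.Theory Num.Theory.
Local Open Scope ring_scope.

Section Defs.
Variable K : rcfType.

Definition vec := 'cV[K]_4.
Definition bivec := 'M[K]_4.

Definition stde (i : 'I_4) : vec := delta_mx i 0.

Definition g (x y : vec) : K := \sum_(i < 4) x i 0 * y i 0.

Definition skewsym (A : bivec) : Prop := A^T = - A.

Definition wedge (x y : vec) : bivec := y *m x^T - x *m y^T.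

(* inner product on Lambda^2 V making {e_i /\ e_j}_{i<j} orthonormal:
   the coefficient of e_i /\ e_j in A is A j i *)
Definition ip (A B : bivec) : K :=
  \sum_(i < 4) \sum_(j < 4 | (i < j)%N) A j i * B j i.

Definition eps (i j k l : 'I_4) : K :=
  \det (\matrix_(r < 4, c < 4) ((c == nth i [:: i; j; k; l] r)%:R : K)).

Definition hodge (A : bivec) : bivec :=
  \matrix_(a < 4, b < 4) (2^-1 * \sum_(i < 4) \sum_(j < 4) eps i j a b * A i j).

Definition proj_plus (A : bivec) : bivec := 2^-1 *: (A + hodge A).
Definition proj_minus (A : bivec) : bivec := 2^-1 *: (A - hodge A).

(* action of L in Lambda^2 V on Lambda^2 V: the linear extension of
   L (x /\ y) = L x /\ y + x /\ L y  (note xi = sum_{i,j} xi_ji/2 e_i /\ e_j) *)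
Definition actL (L xi : bivec) : bivec :=
  \sum_(i < 4) \sum_(j < 4)
     (xi j i / 2) *: (wedge (L *m stde i) (stde j) + wedge (stde i) (L *m stde j)).

Definition act_form (L : bivec) (S : bivec -> bivec -> K) : bivec -> bivec -> K :=
  fun xi eta => - S (actL L xi) eta - S xi (actL L eta).

Definition Rm (R : bivec -> bivec -> K) (x y z w : vec) : K := R (wedge x y) (wedge z w).

Definition sym_bilinear (R : bivec -> bivec -> K) : Prop :=
  (forall xi eta, skewsym xi -> skewsym eta -> R xi eta = R eta xi) /\
  (forall (a : K) xi1 xi2 eta, skewsym xi1 -> skewsym xi2 -> skewsym eta ->
      R (a *: xi1 + xi2) eta = a * R xi1 eta + R xi2 eta).

Definition bianchi (R : bivec -> bivec -> K) : Prop :=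
  forall x y z w : vec, Rm R x y z w + Rm R y z x w + Rm R z x y w = 0.

Definition Ric (R : bivec -> bivec -> K) (y w : vec) : K :=
  \sum_(i < 4) Rm R y (stde i) w (stde i).

Definition einstein (R : bivec -> bivec -> K) : Prop :=
  exists c : K, forall y w : vec, Ric R y w = c * g y w.

(* the bases Xi_1..Xi_6 (0-indexed) built from a basis e = columns of Q *)
Definition XiN (Q : 'M[K]_4) (n : nat) : bivec :=
  let e := fun k : nat => col (inord k) Q in
  (Num.sqrt 2)^-1 *:
  match n with
  | 0 => wedge (e 0%N) (e 1%N) + wedge (e 2%N) (e 3%N)
  | 1 => wedge (e 0%N) (e 2%N) - wedge (e 1%N) (e 3%N)
  | 2 => wedge (e 0%N) (e 3%N) + wedge (e 1%N) (e 2%N)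
  | 3 => wedge (e 0%N) (e 1%N) - wedge (e 2%N) (e 3%N)
  | 4 => wedge (e 0%N) (e 2%N) + wedge (e 1%N) (e 3%N)
  | _ => wedge (e 0%N) (e 3%N) - wedge (e 1%N) (e 2%N)
  end.

Definition Xi (Q : 'M[K]_4) (a : 'I_6) : bivec := XiN Q a.

Definition stdL2 (p : 'I_6) : bivec :=
  match nat_of_ord p with
  | 0 => wedge (stde (inord 0)) (stde (inord 1))
  | 1 => wedge (stde (inord 0)) (stde (inord 2))
  | 2 => wedge (stde (inord 0)) (stde (inord 3))
  | 3 => wedge (stde (inord 1)) (stde (inord 2))
  | 4 => wedge (stde (inord 1)) (stde (inord 3))
  | _ => wedge (stde (inord 2)) (stde (inord 3))
  end.

(* squared norms of bilinear forms, over orthonormal bases of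
   Lambda^2 V, Lambda^+ V, Lambda^- V respectively *)
Definition normsq2 (S : bivec -> bivec -> K) : K :=
  \sum_(a < 6) \sum_(b < 6) (S (stdL2 a) (stdL2 b)) ^+ 2.
Definition normsqP (S : bivec -> bivec -> K) : K :=
  \sum_(a < 3) \sum_(b < 3) (S (XiN 1%:M a) (XiN 1%:M b)) ^+ 2.
Definition normsqM (S : bivec -> bivec -> K) : K :=
  \sum_(a < 3) \sum_(b < 3) (S (XiN 1%:M (a + 3)%N) (XiN 1%:M (b + 3)%N)) ^+ 2.

Definition is_eigenvalue (R : bivec -> bivec -> K) (mu : K) : Prop :=
  exists xi : bivec, [/\ skewsym xi, xi != 0 &
    forall eta, skewsym eta -> R xi eta = mu * ip xi eta].
Definition is_max_eigenvalue R mu :=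
  is_eigenvalue R mu /\ forall nu, is_eigenvalue R nu -> nu <= mu.
Definition is_min_eigenvalue R mu :=
  is_eigenvalue R mu /\ forall nu, is_eigenvalue R nu -> mu <= nu.

End Defs.

(* for gamma (0-indexed), the two other indices alpha < beta of its triple *)
Definition partA (c : nat) : nat :=
  match c with 0 => 1 | 1 => 0 | 2 => 0 | 3 => 4 | 4 => 3 | _ => 3 end.
Definition partB (c : nat) : nat :=
  match c with 0 => 2 | 1 => 2 | 2 => 1 | 3 => 5 | 4 => 5 | _ => 4 end.

(* Main.v *)
Require Import Defs.
From HB Require Import structures.
From mathcomp Require Import all_boot all_order all_algebra.
From mathcomp.algebra_tactics Require Import ring lra.
Import Order.TTheory GRing.Theory Num.Theory.
Local Open Scope ring_scope.
Set Implicit Arguments. Unset Strict Implicit. Unset Printing Implicit Defensive.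

Section Aux.
Variable K : rcfType.

Definition skN (x : nat -> K) (i j : nat) : K :=
  match i, j with
  | 1, 0 => x 0%N | 0, 1 => - x 0%N
  | 2, 0 => x 1%N | 0, 2 => - x 1%N
  | 3, 0 => x 2%N | 0, 3 => - x 2%N
  | 2, 1 => x 3%N | 1, 2 => - x 3%N
  | 3, 1 => x 4%N | 1, 3 => - x 4%N
  | 3, 2 => x 5%N | 2, 3 => - x 5%N
  | _, _ => 0 end.

Definition skM (x : nat -> K) : 'M[K]_4 := \matrix_(i < 4, j < 4) skN x i j.

Definition hiN (n : nat) : nat := match n with 0 => 1 | 1 => 2 | 2 => 3 | 3 => 2 | 4 => 3 | _ => 3 end.
Definition loN (n : nat) : nat := match n with 0 => 0 | 1 => 0 | 2 => 0 | 3 => 1 | 4 => 1 | _ => 2 end.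
Lemma hiN_lt n : (hiN n < 4)%N. Proof. by case: n => [|[|[|[|[|n]]]]]. Qed.
Lemma loN_lt n : (loN n < 4)%N. Proof. by case: n => [|[|[|[|[|n]]]]]. Qed.
Definition hiO n : 'I_4 := Ordinal (hiN_lt n).
Definition loO n : 'I_4 := Ordinal (loN_lt n).
Definition cA (A : 'M[K]_4) (n : nat) : K := A (hiO n) (loO n).

Lemma two_neq0 : (2:K) != 0. Proof. by rewrite pnatr_eq0. Qed.

Ltac ord4 i := let Hi := fresh "H" in case: i => [[|[|[|[|?]]]] Hi] //.

Lemma skM_skew x : skewsym (skM x).
Proof.
apply/matrixP => i j; rewrite !mxE.
by ord4 i; ord4 j; rewrite /= ?opprK ?oppr0.
Qed.

Lemma skew_entry (A : 'M[K]_4) : skewsym A -> forall i j, A j i = - A i j.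
Proof. rewrite /skewsym => hA i j; have := congr1 (fun M : 'M[K]_4 => M i j) hA; by rewrite !mxE. Qed.

Lemma skewE A : skewsym A -> A = skM (cA A).
Proof.
move=> hA; have h := skew_entry hA.
have hd : forall i j : 'I_4, val i = val j -> A i j = 0.
  by move=> i0 j0 /val_inj ->; have := h j0 j0; lra.
apply/matrixP => i j; rewrite !mxE /cA.
ord4 i; ord4 j; rewrite /=; try (congr (A _ _); apply: val_inj => //);
  try (rewrite h; congr (- A _ _); apply: val_inj => //);
  by apply: hd.
Qed.


Definition ev (p : nat) (n : nat) : K := if n == p then 1 else 0.

Definition brk (x y : nat -> K) (n : nat) : K :=
  match n with
  | 0 => x 1%N * y 3%N - x 3%N * y 1%N + x 2%N * y 4%N - x 4%N * y 2%N
  | 1 => x 3%N * y 0%N - x 0%N * y 3%N + x 2%N * y 5%N - x 5%N * y 2%N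
  | 2 => x 4%N * y 0%N - x 0%N * y 4%N + x 5%N * y 1%N - x 1%N * y 5%N
  | 3 => x 0%N * y 1%N - x 1%N * y 0%N + x 4%N * y 5%N - x 5%N * y 4%N
  | 4 => x 0%N * y 2%N - x 2%N * y 0%N + x 5%N * y 3%N - x 3%N * y 5%N
  | _ => x 1%N * y 2%N - x 2%N * y 1%N + x 3%N * y 4%N - x 4%N * y 3%N
  end.

Lemma skM_sum (x : nat -> K) : skM x = \sum_(p < 6) x p *: skM (ev p).
Proof.
apply/matrixP => i j; rewrite summxE !big_ord_recl big_ord0 !mxE.
by ord4 i; ord4 j; rewrite /bump /addn /addn_rec /ev /=; ring.
Qed.

Lemma ip_skM (x y : nat -> K) : ip (skM x) (skM y) = \sum_(p < 6) x p * y p.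
Proof.
rewrite /ip; under eq_bigr do rewrite big_mkcond.
rewrite !big_ord_recl !big_ord0 /bump /addn /addn_rec /= !mxE /=.
ring.
Qed.

Lemma comm_skM (x y : nat -> K) : skM x *m skM y - skM y *m skM x = skM (brk x y).
Proof.
apply/matrixP => i j; rewrite !mxE !big_ord_recl !big_ord0 !mxE.
by ord4 i; ord4 j; rewrite /bump /addn /addn_rec /=; ring.
Qed.

Lemma ip_tr (A B : 'M[K]_4) : skewsym A -> skewsym B -> ip A B = 2^-1 * \tr (A^T *m B).
Proof.
move=> /skewE -> /skewE ->; rewrite ip_skM /mxtrace.
rewrite !big_ord_recl !big_ord0 !mxE !big_ord_recl !big_ord0 !mxE /bump /addn /addn_rec /=.
by field.
Qed.


Lemma wedgeL (l : nat -> K) (u v : 'cV[K]_4) :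
  wedge (skM l *m u) v + wedge u (skM l *m v) = skM l *m wedge u v - wedge u v *m skM l.
Proof.
apply/matrixP => r c; rewrite /wedge !(mxE, big_ord_recl, big_ord0).
(ord4 r; ord4 c; rewrite /bump /addn /addn_rec /=; ring).
Qed.

Lemma Xrecon (X : 'M[K]_4) : skewsym X ->
  \sum_(i < 4) \sum_(j < 4) (X j i / 2) *: wedge (stde K i) (stde K j) = X.
Proof.
move=> /skewE ->; set x := cA _.
apply/matrixP => r c; rewrite /wedge /stde !(summxE, mxE, big_ord_recl, big_ord0).
(ord4 r; ord4 c; rewrite /bump /addn /addn_rec /=; by field).
Qed.

Lemma actLE (L X : 'M[K]_4) : skewsym L -> skewsym X -> actL L X = L *m X - X *m L.
Proof.
move=> hL hX.
have -> : L *m X - X *m L =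
  L *m (\sum_(i < 4) \sum_(j < 4) (X j i / 2) *: wedge (stde K i) (stde K j))
  - (\sum_(i < 4) \sum_(j < 4) (X j i / 2) *: wedge (stde K i) (stde K j)) *m L.
  by rewrite Xrecon.
rewrite /actL mulmx_sumr mulmx_suml -sumrB; apply: eq_bigr => i _.
rewrite mulmx_sumr mulmx_suml -sumrB; apply: eq_bigr => j _.
rewrite (skewE hL) wedgeL scalerBr -scalemxAr -scalemxAl.
by [].
Qed.

Lemma skew_lin a (A B : 'M[K]_4) : skewsym A -> skewsym B -> skewsym (a *: A + B).
Proof.
move=> hA hB; apply/matrixP => i j.
by rewrite !mxE (skew_entry hA) (skew_entry hB) opprD mulrN.
Qed.

Lemma skew0 : skewsym (0 : 'M[K]_4).
Proof. by rewrite /skewsym trmx0 oppr0. Qed.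

Lemma skewZ a (A : 'M[K]_4) : skewsym A -> skewsym (a *: A).
Proof. by move=> hA; rewrite -[_ *: _]addr0; apply: skew_lin => //; exact: skew0. Qed.

Lemma skewD (A B : 'M[K]_4) : skewsym A -> skewsym B -> skewsym (A + B).
Proof. by move=> hA hB; rewrite -[A]scale1r; apply: skew_lin. Qed.

Lemma skewN (A : 'M[K]_4) : skewsym A -> skewsym (- A).
Proof. by move=> hA; rewrite -scaleN1r; apply: skewZ. Qed.

Lemma skew_sum n (c : 'I_n -> K) (A : 'I_n -> 'M[K]_4) :
  (forall i, skewsym (A i)) -> skewsym (\sum_(i < n) c i *: A i).
Proof.
move=> hA; elim: n c A hA => [|n IH] c A hA; first by rewrite big_ord0; exact: skew0.
rewrite big_ord_recr /= addrC; apply: skew_lin => //; exact: IH.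
Qed.

Definition bil (S : 'M[K]_4 -> 'M[K]_4 -> K) : Prop :=
  (forall a x1 x2 y, skewsym x1 -> skewsym x2 -> skewsym y ->
      S (a *: x1 + x2) y = a * S x1 y + S x2 y) /\
  (forall a x1 x2 y, skewsym x1 -> skewsym x2 -> skewsym y ->
      S y (a *: x1 + x2) = a * S y x1 + S y x2).

Lemma bil_R (R : 'M[K]_4 -> 'M[K]_4 -> K) : sym_bilinear R -> bil R.
Proof.
case=> hs hl; split=> // a x1 x2 y h1 h2 hy.
rewrite hs ?hl ?(hs y) //; exact: skew_lin.
Qed.

Lemma bil0l S y : bil S -> skewsym y -> S 0 y = 0.
Proof.
case=> hl _ hy; have := hl 1 0 0 y skew0 skew0 hy.
rewrite scale1r addr0 mul1r => h; lra.
Qed.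

Lemma bil0r S y : bil S -> skewsym y -> S y 0 = 0.
Proof.
case=> _ hl hy; have := hl 1 0 0 y skew0 skew0 hy.
rewrite scale1r addr0 mul1r => h; lra.
Qed.

Lemma bil_suml S n (c : 'I_n -> K) (A : 'I_n -> 'M[K]_4) y :
  bil S -> (forall i, skewsym (A i)) -> skewsym y ->
  S (\sum_(i < n) c i *: A i) y = \sum_(i < n) c i * S (A i) y.
Proof.
move=> hS hA hy; elim: n c A hA => [|n IH] c A hA.
  by rewrite !big_ord0 bil0l.
rewrite !big_ord_recr /= addrC hS.1 ?IH ?(addrC (c _ * _)) //.
exact: skew_sum.
Qed.

Lemma bil_sumr S n (c : 'I_n -> K) (A : 'I_n -> 'M[K]_4) y :
  bil S -> (forall i, skewsym (A i)) -> skewsym y ->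
  S y (\sum_(i < n) c i *: A i) = \sum_(i < n) c i * S y (A i).
Proof.
move=> hS hA hy; elim: n c A hA => [|n IH] c A hA.
  by rewrite !big_ord0 bil0r.
rewrite !big_ord_recr /= addrC hS.2 ?IH ?(addrC (c _ * _)) //.
exact: skew_sum.
Qed.

Lemma bil_coord S (x y : nat -> K) : bil S ->
  S (skM x) (skM y) = \sum_(p < 6) \sum_(q < 6) x p * y q * S (skM (ev p)) (skM (ev q)).
Proof.
move=> hS; rewrite [skM x]skM_sum bil_suml //; last exact: skM_skew.
  apply: eq_bigr => p _; rewrite [skM y]skM_sum bil_sumr //; last exact: skM_skew.
    by rewrite mulr_sumr; apply: eq_bigr => q _; ring.
  by move=> ?; exact: skM_skew.
by move=> ?; exact: skM_skew.
Qed.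

Lemma skew_comm (L X : 'M[K]_4) : skewsym L -> skewsym X -> skewsym (L *m X - X *m L).
Proof. by move=> /skewE -> /skewE ->; rewrite comm_skM; exact: skM_skew. Qed.

Lemma actL_skew (L X : 'M[K]_4) : skewsym L -> skewsym X -> skewsym (actL L X).
Proof. by move=> hL hX; rewrite actLE //; exact: skew_comm. Qed.

Lemma actL_lin (L : 'M[K]_4) a x1 x2 : skewsym L -> skewsym x1 -> skewsym x2 ->
  actL L (a *: x1 + x2) = a *: actL L x1 + actL L x2.
Proof.
move=> hL h1 h2; rewrite !actLE //; last exact: skew_lin.
rewrite mulmxDr mulmxDl -scalemxAr -scalemxAl scalerBr.
by rewrite addrACA opprD.
Qed.

Lemma bil_act (L : 'M[K]_4) (R : 'M[K]_4 -> 'M[K]_4 -> K) :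
  skewsym L -> bil R -> bil (act_form L R).
Proof.
move=> hL [hl hr]; rewrite /act_form; split=> a x1 x2 y h1 h2 hy.
  have s1 := actL_skew hL h1; have s2 := actL_skew hL h2; have sy := actL_skew hL hy.
  rewrite actL_lin // (hl _ _ _ y) // (hl _ _ _ (actL L y)) //; ring.
have s1 := actL_skew hL h1; have s2 := actL_skew hL h2; have sy := actL_skew hL hy.
rewrite actL_lin // (hr _ _ _ (actL L y)) // (hr _ _ _ y) //; ring.
Qed.

Lemma inordO n k (H : (k < n.+1)%N) : inord k = Ordinal H.
Proof. by apply: val_inj; rewrite /= inordK. Qed.

Lemma stdL2E (a : 'I_6) : stdL2 K a = skM (ev a).
Proof.
apply/matrixP => r c.
rewrite /stdL2 /wedge /stde ?(@inordO 3 0 isT) ?(@inordO 3 1 isT) ?(@inordO 3 2 isT) ?(@inordO 3 3 isT).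
case: a => [[|[|[|[|[|[|a]]]]]] Ha] //=;
  rewrite !(mxE, big_ord_recl, big_ord0); ord4 r; ord4 c; rewrite /ev /=; ring.
Qed.

Lemma sumsq_tr n (N : 'M[K]_n) : \sum_(a < n) \sum_(b < n) N a b ^+ 2 = \tr (N *m N^T).
Proof.
rewrite /mxtrace; apply: eq_bigr => a _; rewrite mxE; apply: eq_bigr => b _.
by rewrite mxE expr2.
Qed.

Lemma normsq2_inv S (u : 'I_6 -> 'M[K]_4) : bil S -> (forall a, skewsym (u a)) ->
  (forall a b, ip (u a) (u b) = (a == b)%:R) ->
  \sum_(a < 6) \sum_(b < 6) S (u a) (u b) ^+ 2 = normsq2 S.
Proof.
move=> hS hu horth.
pose P : 'M[K]_6 := \matrix_(a < 6, p < 6) cA (u a) p.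
pose M : 'M[K]_6 := \matrix_(p < 6, q < 6) S (skM (ev p)) (skM (ev q)).
have h1 : forall a b, S (u a) (u b) = (P *m M *m P^T) a b.
  move=> a b; rewrite (skewE (hu a)) (skewE (hu b)) bil_coord // mxE.
  under [RHS]eq_bigr do rewrite mxE mulr_suml.
  rewrite exchange_big /=; apply: eq_bigr => p _; apply: eq_bigr => q _.
  by rewrite !mxE; ring.
have h2 : P *m P^T = 1%:M.
  apply/matrixP => a b; rewrite !mxE -horth (skewE (hu a)) (skewE (hu b)) ip_skM.
  by apply: eq_bigr => p _; rewrite !mxE.
have h3 : P^T *m P = 1%:M by apply: mulmx1C.
have -> : normsq2 S = \sum_(a < 6) \sum_(b < 6) M a b ^+ 2.
  by rewrite /normsq2; apply: eq_bigr => a _; apply: eq_bigr => b _; rewrite !stdL2E mxE.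
under eq_bigr do under eq_bigr do rewrite h1.
rewrite !sumsq_tr !trmx_mul !trmxK.
rewrite -!mulmxA (mulmxA P^T) h3 mul1mx.
by rewrite mxtrace_mulC -!mulmxA h3 mulmx1.
Qed.

Definition cj (Q A : 'M[K]_4) : 'M[K]_4 := Q *m A *m Q^T.

Lemma cj_wedge (Q : 'M[K]_4) (u v : 'cV[K]_4) : wedge (Q *m u) (Q *m v) = cj Q (wedge u v).
Proof.
by rewrite /wedge /cj !trmx_mul mulmxBr mulmxBl !mulmxA.
Qed.

Lemma cjD Q (A B : 'M[K]_4) : cj Q (A + B) = cj Q A + cj Q B.
Proof. by rewrite /cj mulmxDr mulmxDl. Qed.
Lemma cjB Q (A B : 'M[K]_4) : cj Q (A - B) = cj Q A - cj Q B.
Proof. by rewrite /cj mulmxBr mulmxBl. Qed.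
Lemma cjZ Q c (A : 'M[K]_4) : cj Q (c *: A) = c *: cj Q A.
Proof. by rewrite /cj -scalemxAr -scalemxAl. Qed.

Lemma XiNQ (Q : 'M[K]_4) n : XiN Q n = cj Q (XiN 1%:M n).
Proof.
rewrite /XiN /= !colE !mul1mx !cj_wedge.
by case: n => [|[|[|[|[|n]]]]] /=; rewrite -?cjB -?cjD -cjZ.
Qed.

Definition tt : K := (Num.sqrt 2)^-1.
Lemma tt2 : tt * tt = 2^-1.
Proof. by rewrite /tt -invfM -expr2 sqr_sqrtr // ler0n. Qed.

Definition wN (a : nat) (n : nat) : K :=
  match a with
  | 0 => match n with 0 => 1 | 5 => 1 | _ => 0 end
  | 1 => match n with 1 => 1 | 4 => -1 | _ => 0 end
  | 2 => match n with 2 => 1 | 3 => 1 | _ => 0 end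
  | 3 => match n with 0 => 1 | 5 => -1 | _ => 0 end
  | 4 => match n with 1 => 1 | 4 => 1 | _ => 0 end
  | _ => match n with 2 => 1 | 3 => -1 | _ => 0 end
  end.

Lemma skMZ c (x : nat -> K) : c *: skM x = skM (fun n => c * x n).
Proof. apply/matrixP => i j; rewrite !mxE; ord4 i; ord4 j; rewrite /=; ring. Qed.

Lemma XiN1 n : XiN (1%:M : 'M[K]_4) n = tt *: skM (wN n).
Proof.
rewrite /XiN /= !colE !mul1mx -/tt.
rewrite ?(@inordO 3 0 isT) ?(@inordO 3 1 isT) ?(@inordO 3 2 isT) ?(@inordO 3 3 isT).
congr (_ *: _); apply/matrixP => r c.
case: n => [|[|[|[|[|n]]]]] /=;
  rewrite /wedge !(mxE, big_ord_recl, big_ord0); ord4 r; ord4 c; rewrite /=; ring.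
Qed.

Lemma cj_skew Q (A : 'M[K]_4) : skewsym A -> skewsym (cj Q A).
Proof. by rewrite /skewsym /cj => hA; rewrite !trmx_mul trmxK hA mulNmx mulmxN mulmxA. Qed.

Lemma cj_comm Q (A B : 'M[K]_4) : Q^T *m Q = 1%:M ->
  cj Q A *m cj Q B - cj Q B *m cj Q A = cj Q (A *m B - B *m A).
Proof.
move=> hQ; rewrite cjB /cj !mulmxA.
by rewrite -(mulmxA _ Q^T Q) hQ mulmx1 -(mulmxA _ Q^T Q) hQ mulmx1.
Qed.

Lemma cj_ip Q (A B : 'M[K]_4) : Q^T *m Q = 1%:M -> skewsym A -> skewsym B ->
  ip (cj Q A) (cj Q B) = ip A B.
Proof.
move=> hQ hA hB; rewrite (ip_tr (cj_skew Q hA) (cj_skew Q hB)) (ip_tr hA hB).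
congr (_ * _).
rewrite /cj !trmx_mul trmxK !mulmxA -(mulmxA _ Q^T Q) hQ mulmx1.
rewrite -!mulmxA mxtrace_mulC -!mulmxA hQ mulmx1; congr (\tr _).
Qed.

Lemma cj_sum Q (c : 'I_6 -> K) (X : 'I_6 -> 'M[K]_4) :
  \sum_(a < 6) c a *: cj Q (X a) = cj Q (\sum_(a < 6) c a *: X a).
Proof.
rewrite /cj mulmx_sumr mulmx_suml; apply: eq_bigr => a _.
by rewrite -scalemxAr -scalemxAl.
Qed.

Lemma skM_lsum (c : 'I_6 -> K) (x : 'I_6 -> nat -> K) :
  \sum_(a < 6) c a *: skM (x a) = skM (fun n => \sum_(a < 6) c a * x a n).
Proof.
apply/matrixP => i j; rewrite summxE !mxE.
under eq_bigr do rewrite !mxE.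
ord4 i; ord4 j; rewrite /=;
 first [ by apply: eq_bigr => a _ | by rewrite -sumrN; apply: eq_bigr => a _; rewrite mulrN
       | by rewrite big1 // => a _; rewrite mulr0 ].
Qed.

Lemma ipZ a b (A B : 'M[K]_4) : ip (a *: A) (b *: B) = a * b * ip A B.
Proof.
rewrite /ip mulr_sumr; apply: eq_bigr => i _; rewrite mulr_sumr; apply: eq_bigr => j _.
by rewrite !mxE; ring.
Qed.

Lemma commZ a b (A B : 'M[K]_4) :
  (a *: A) *m (b *: B) - (b *: B) *m (a *: A) = (a * b) *: (A *m B - B *m A).
Proof. by rewrite -!scalemxAl -!scalemxAr !scalerA (mulrC b) scalerBr. Qed.

Lemma ip00 : ip (0 : 'M[K]_4) 0 = 0.
Proof. by rewrite /ip big1 // => i _; rewrite big1 // => j _; rewrite mxE mul0r. Qed.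

Lemma sq_bound (lmin lmax x y : K) : lmin <= x -> x <= lmax -> lmin <= y -> y <= lmax ->
  (x - y) ^+ 2 <= (lmax - lmin) ^+ 2.
Proof.
move=> h1 h2 h3 h4.
have h5 : 0 <= (lmax - lmin) - (x - y) by lra.
have h6 : 0 <= (lmax - lmin) + (x - y) by lra.
have := mulr_ge0 h5 h6; nra.
Qed.

End Aux.

Section P1.
Variable K : rcfType.

Definition inv4 (i j k l : nat) : nat := (j < i) + (k < i) + (l < i) + (k < j) + (l < j) + (l < k).
Definition epsT (i j k l : nat) : K :=
  if uniq [:: i; j; k; l] then (if odd (inv4 i j k l) then -1 else 1) else 0.

Ltac ord4 i := let Hi := fresh "H" in case: i => [[|[|[|[|?]]]] Hi] //.
Ltac dexp := rewrite (expand_det_row _ ord0) !big_ord_recl big_ord0 /cofactor !mxE /= ?mulr0n ?mulr1n ?mul0r ?add0r ?addr0 ?mul1r.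

Lemma eps_rep (i j k l : 'I_4) (r1 r2 : 'I_4) : r1 != r2 ->
  nth i [:: i; j; k; l] r1 = nth i [:: i; j; k; l] r2 -> eps K i j k l = 0.
Proof.
move=> hr he; rewrite /eps; apply: (determinant_alternate hr) => c.
by rewrite !mxE he.
Qed.

Lemma eps_val (i j k l : 'I_4) : eps K i j k l = epsT i j k l.
Proof.
(case: i => [[|[|[|[|?]]]] ?] //; case: j => [[|[|[|[|?]]]] ?] //;
case: k => [[|[|[|[|?]]]] ?] //; case: l => [[|[|[|[|?]]]] ?] //;
first [ by rewrite (@eps_rep _ _ _ _ 0 1) //=; apply: val_inj
      | by rewrite (@eps_rep _ _ _ _ 0 2) //=; apply: val_inj
      | by rewrite (@eps_rep _ _ _ _ 0 3) //=; apply: val_inj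
      | by rewrite (@eps_rep _ _ _ _ 1 2) //=; apply: val_inj
      | by rewrite (@eps_rep _ _ _ _ 1 3) //=; apply: val_inj
      | by rewrite (@eps_rep _ _ _ _ 2 3) //=; apply: val_inj
      | rewrite /eps; do 4 (try dexp); rewrite ?det_mx00 /epsT /inv4 /bump /addn /addn_rec /=; ring ]).
Qed.

Definition hodgeC (l : nat -> K) (n : nat) : K :=
  match n with 0 => l 5%N | 1 => - l 4%N | 2 => l 3%N | 3 => l 2%N | 4 => - l 1%N | _ => l 0%N end.

Lemma hodge_skM (l : nat -> K) : hodge (skM l) = skM (hodgeC l).
Proof.
apply/matrixP => a b; rewrite !mxE.
under eq_bigr do under eq_bigr do rewrite mxE eps_val.
(rewrite !big_ord_recl !big_ord0; ord4 a; ord4 b; rewrite /epsT /inv4 /bump /addn /addn_rec /=; by field).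
Qed.
End P1.

Section P2.
Variable K : rcfType.

Lemma part2_key (R : bivec K -> bivec K -> K) (Q : 'M[K]_4) (lam coef : 'I_6 -> K) :
  sym_bilinear R -> Q^T *m Q = 1%:M ->
  (forall (a : 'I_6) (eta : bivec K), skewsym eta -> R (Xi Q a) eta = lam a * ip (Xi Q a) eta) ->
  let m := fun n => \sum_(a < 6) coef a * wN K a n in
  forall a b : 'I_6,
  act_form (\sum_(a < 6) coef a *: Xi Q a) R (Xi Q a) (Xi Q b) =
  - (tt K * (tt K * tt K)) * (lam (inord b) * \sum_(p < 6) wN K b p * brk m (wN K a) p
                  + lam (inord a) * \sum_(p < 6) wN K a p * brk m (wN K b) p).
Proof.
move=> hR hQ hlam m a b.
have hXi : forall c, Xi Q c = cj Q (tt K *: skM (wN K c)) by move=> c; rewrite /Xi XiNQ XiN1.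
have sY : forall c, skewsym (tt K *: skM (wN K c)) by move=> c; apply: skewZ; exact: skM_skew.
have sXi : forall c, skewsym (Xi Q c) by move=> c; rewrite hXi; apply: cj_skew.
have sM : skewsym (tt K *: skM m) by apply: skewZ; exact: skM_skew.
have hL : \sum_(a < 6) coef a *: Xi Q a = cj Q (tt K *: skM m).
  under eq_bigr do rewrite hXi.
  rewrite cj_sum; congr (cj Q _).
  under eq_bigr do rewrite scalerA mulrC -scalerA.
  by rewrite -scaler_sumr skM_lsum.
have sL : skewsym (\sum_(a < 6) coef a *: Xi Q a) by rewrite hL; exact: cj_skew.
have hC : forall c, actL (\sum_(a < 6) coef a *: Xi Q a) (Xi Q c)
                  = cj Q ((tt K * tt K) *: skM (brk m (wN K c))).
  move=> c; rewrite actLE // hL hXi cj_comm // commZ comm_skM //.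
have sC : forall c, skewsym (cj Q ((tt K * tt K) *: skM (brk m (wN K c)))).
  by move=> c; apply: cj_skew; apply: skewZ; exact: skM_skew.
rewrite /act_form !hC.
rewrite hR.1 //; rewrite hlam // hlam //.
rewrite !hXi !cj_ip //; last 2 first.
  all: try (apply: skewZ; exact: skM_skew).
rewrite ipZ ipZ !ip_skM !inord_val.
ring.
Qed.

Ltac expand := rewrite ?(big_ord_recl, big_ord0) /bump /addn /addn_rec /=.

Lemma sum6 (F : 'I_6 -> K) : \sum_(a < 6) F a =
  F (inord 0) + F (inord 1) + F (inord 2) + F (inord 3) + F (inord 4) + F (inord 5).
Proof.
rewrite !big_ord_recl big_ord0 addr0 !addrA.
by repeat congr (_ + _); congr F; apply: val_inj; rewrite /= inordK.
Qed.

Definition Ftab (coef lam : 'I_6 -> K) (a b : nat) : K :=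
  match a, b with
  | 0, 1 | 1, 0 => 4 * coef (inord 2) * (lam (inord 1) - lam (inord 0))
  | 0, 2 | 2, 0 => 4 * coef (inord 1) * (lam (inord 0) - lam (inord 2))
  | 1, 2 | 2, 1 => 4 * coef (inord 0) * (lam (inord 2) - lam (inord 1))
  | 3, 4 | 4, 3 => 4 * coef (inord 5) * (lam (inord 3) - lam (inord 4))
  | 3, 5 | 5, 3 => 4 * coef (inord 4) * (lam (inord 5) - lam (inord 3))
  | 4, 5 | 5, 4 => 4 * coef (inord 3) * (lam (inord 4) - lam (inord 5))
  | _, _ => 0 end.

Lemma Fval (coef lam : 'I_6 -> K) (m : nat -> K) :
  (forall n, m n = coef (inord 0) * wN K 0 n + coef (inord 1) * wN K 1 n + coef (inord 2) * wN K 2 n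
     + coef (inord 3) * wN K 3 n + coef (inord 4) * wN K 4 n + coef (inord 5) * wN K 5 n) ->
  forall a b : 'I_6,
  lam (inord b) * \sum_(p < 6) wN K b p * brk m (wN K a) p
   + lam (inord a) * \sum_(p < 6) wN K a p * brk m (wN K b) p = Ftab coef lam a b.
Proof.
move=> hm a b.
case: a => [[|[|[|[|[|[|a]]]]]] Ha] //; case: b => [[|[|[|[|[|[|b]]]]]] Hb] //;
  expand; rewrite !hm /=; ring.
Qed.

Lemma Fsum (coef lam : 'I_6 -> K) :
  \sum_(a < 6) \sum_(b < 6) Ftab coef lam a b ^+ 2 =
  32 * \sum_(c < 6) coef c ^+ 2 * (lam (inord (partA c)) - lam (inord (partB c))) ^+ 2.
Proof.
rewrite [X in _ = 32 * X]sum6 !inordK //=.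
expand.
ring.
Qed.


Lemma part2 (R : bivec K -> bivec K -> K) (Q : 'M[K]_4) (lam coef : 'I_6 -> K) :
  sym_bilinear R -> Q^T *m Q = 1%:M ->
  (forall (a : 'I_6) (eta : bivec K), skewsym eta -> R (Xi Q a) eta = lam a * ip (Xi Q a) eta) ->
   normsq2 (act_form (\sum_(a < 6) coef a *: Xi Q a) R)
     = 4 * \sum_(c < 6) coef c ^+ 2 * (lam (inord (partA c)) - lam (inord (partB c))) ^+ 2
   /\ (forall lmax lmin : K, is_max_eigenvalue R lmax -> is_min_eigenvalue R lmin ->
        normsq2 (act_form (\sum_(a < 6) coef a *: Xi Q a) R) <= 4 * (lmax - lmin) ^+ 2 *
           ip (\sum_(a < 6) coef a *: Xi Q a) (\sum_(a < 6) coef a *: Xi Q a)).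
Proof.
move=> hR hQ hlam.
set m := fun n => \sum_(a < 6) coef a * wN K a n.
have hXi : forall c, Xi Q c = cj Q (tt K *: skM (wN K c)) by move=> c; rewrite /Xi XiNQ XiN1.
have sY : forall c, skewsym (tt K *: skM (wN K c)) by move=> c; apply: skewZ; exact: skM_skew.
have sXi : forall c, skewsym (Xi Q c) by move=> c; rewrite hXi; apply: cj_skew.
have sM : skewsym (tt K *: skM m) by apply: skewZ; exact: skM_skew.
have hL : \sum_(a < 6) coef a *: Xi Q a = cj Q (tt K *: skM m).
  under eq_bigr do rewrite hXi.
  rewrite cj_sum; congr (cj Q _).
  under eq_bigr do rewrite scalerA mulrC -scalerA.
  by rewrite -scaler_sumr skM_lsum.
have sL : skewsym (\sum_(a < 6) coef a *: Xi Q a) by rewrite hL; exact: cj_skew.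
have horth : forall a b, ip (Xi Q a) (Xi Q b) = (a == b)%:R.
  move=> a b; rewrite !hXi cj_ip // ipZ tt2 ip_skM.
  case: a => [[|[|[|[|[|[|a]]]]]] Ha] //; case: b => [[|[|[|[|[|[|b]]]]]] Hb] //;
  expand; by field.
have hm : forall n, m n = coef (inord 0) * wN K 0 n + coef (inord 1) * wN K 1 n + coef (inord 2) * wN K 2 n
   + coef (inord 3) * wN K 3 n + coef (inord 4) * wN K 4 n + coef (inord 5) * wN K 5 n.
  by move=> n; rewrite /m sum6 !inordK.
have hN : normsq2 (act_form (\sum_(a < 6) coef a *: Xi Q a) R) =
          4 * \sum_(c < 6) coef c ^+ 2 * (lam (inord (partA c)) - lam (inord (partB c))) ^+ 2.
  rewrite -(normsq2_inv (bil_act sL (bil_R hR)) sXi horth).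
  under eq_bigr do under eq_bigr do rewrite (@part2_key R Q lam coef hR hQ hlam).
  have e : forall F : K, (- (tt K * (tt K * tt K)) * F) ^+ 2 = (tt K * tt K) ^+ 3 * F ^+ 2.
    by move=> F; ring.
  under eq_bigr do under eq_bigr do rewrite e tt2.
  under eq_bigr do under eq_bigr do rewrite (@Fval coef lam m hm).
  under eq_bigr do rewrite -mulr_sumr.
  rewrite -mulr_sumr Fsum.
  by field.
split=> // lmax lmin [_ hmax] [_ hmin].
have heig : forall a, is_eigenvalue R (lam a).
  move=> a; exists (Xi Q a); split => //; last by move=> eta heta; exact: hlam.
  apply/eqP => h0; have := horth a a; rewrite h0 ip00 eqxx mulr1n => /eqP.
  by rewrite eq_sym oner_eq0.
have hip : ip (\sum_(a < 6) coef a *: Xi Q a) (\sum_(a < 6) coef a *: Xi Q a) =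
           \sum_(c < 6) coef c ^+ 2.
  rewrite hL cj_ip // ipZ tt2 ip_skM [RHS]sum6.
  expand; rewrite !hm /=; by field.
rewrite hN hip -mulrA ler_wpM2l // mulr_sumr; apply: ler_sum => c _.
rewrite [X in _ <= X]mulrC; apply: ler_wpM2l; first exact: sqr_ge0.
by apply: sq_bound; [apply: hmin | apply: hmax | apply: hmin | apply: hmax]; apply: heig.
Qed.

End P2.

Section P1b.
Variable K : rcfType.
Ltac ord4 i := let Hi := fresh "H" in case: i => [[|[|[|[|?]]]] Hi] //.
Ltac expand := rewrite ?(big_ord_recl, big_ord0) /bump /addn /addn_rec /=.

Definition rr (R : 'M[K]_4 -> 'M[K]_4 -> K) (p q : nat) : K := R (skM (ev K p)) (skM (ev K q)).
Arguments rr : simpl never.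
Definition rS R (p q : nat) : K := if (p <= q)%N then rr R p q else rr R q p.

Lemma R_coord R (x y : nat -> K) : sym_bilinear R ->
  R (skM x) (skM y) = \sum_(p < 6) \sum_(q < 6) x p * y q * rS R p q.
Proof.
move=> hR; rewrite bil_coord; last exact: bil_R.
apply: eq_bigr => p _; apply: eq_bigr => q _; rewrite /rS /rr.
by case: leqP => // _; rewrite hR.1 //; exact: skM_skew.
Qed.

Definition pidx (a i : nat) : nat :=
  match a, i with
  | 0, 1 | 1, 0 => 0 | 0, 2 | 2, 0 => 1 | 0, 3 | 3, 0 => 2
  | 1, 2 | 2, 1 => 3 | 1, 3 | 3, 1 => 4 | _, _ => 5 end.
Definition sgn (a i : nat) : K := if (a < i)%N then 1 else if (i < a)%N then -1 else 0.

Lemma wedge_stde (a i : 'I_4) : wedge (stde K a) (stde K i) = sgn a i *: skM (ev K (pidx a i)).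
Proof.
apply/matrixP => r c; rewrite /wedge /stde !(mxE, big_ord_recl, big_ord0).
(ord4 r; ord4 c; ord4 a; ord4 i; rewrite /sgn /ev /=; ring).
Qed.

Lemma bilZZ S a b (x y : 'M[K]_4) : bil S -> skewsym x -> skewsym y ->
  S (a *: x) (b *: y) = a * b * S x y.
Proof.
move=> hS hx hy.
have h1 : forall c (z w : 'M[K]_4), skewsym z -> skewsym w -> S (c *: z) w = c * S z w.
  move=> c z w hz hw; rewrite -[c *: z]addr0 hS.1 //; last exact: skew0.
  by rewrite bil0l // addr0.
have h2 : forall c (z w : 'M[K]_4), skewsym z -> skewsym w -> S w (c *: z) = c * S w z.
  move=> c z w hz hw; rewrite -[c *: z]addr0 hS.2 //; last exact: skew0.
  by rewrite bil0r // addr0.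
rewrite h1 ?h2 //; [ring | exact: skewZ].
Qed.

Lemma ric_eqs R : sym_bilinear R -> einstein R ->
  (rr R 5 5 = rr R 0 0 /\ rr R 4 4 = rr R 1 1 /\ rr R 3 3 = rr R 2 2) /\
  (rr R 4 5 = - rr R 0 1 /\ rr R 3 5 = rr R 0 2 /\ rr R 3 4 = - rr R 1 2) /\
  (rr R 2 5 = rr R 0 3 /\ rr R 2 4 = - rr R 1 3 /\ rr R 1 5 = - rr R 0 4).
Proof.
move=> hR [c hc].
have hRic : forall a w : 'I_4, \sum_(i < 4) sgn a i * sgn w i * rS R (pidx a i) (pidx w i)
   = c * \sum_(i < 4) stde K a i 0 * stde K w i 0.
  move=> a w; rewrite -hc /Ric /Rm; apply: eq_bigr => i _.
  rewrite !wedge_stde bilZZ; try exact: skM_skew; last exact: bil_R.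
  congr (_ * _); rewrite /rS /rr.
  by case: leqP => // _; rewrite hR.1 //; exact: skM_skew.
pose o0 : 'I_4 := @Ordinal 4 0 isT. pose o1 : 'I_4 := @Ordinal 4 1 isT.
pose o2 : 'I_4 := @Ordinal 4 2 isT. pose o3 : 'I_4 := @Ordinal 4 3 isT.
have e00 := hRic o0 o0. have e11 := hRic o1 o1. have e22 := hRic o2 o2. have e33 := hRic o3 o3.
have e01 := hRic o0 o1. have e02 := hRic o0 o2. have e03 := hRic o0 o3.
have e12 := hRic o1 o2. have e13 := hRic o1 o3. have e23 := hRic o2 o3.
move: e00 e11 e22 e33 e01 e02 e03 e12 e13 e23.
rewrite /sgn /stde /rS !(big_ord_recl, big_ord0) !mxE /bump /addn /addn_rec /=.
by move=> *; repeat split; lra.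
Qed.


Lemma projP (l : nat -> K) : proj_plus (skM l) = skM (fun n => 2^-1 * (l n + hodgeC l n)).
Proof.
rewrite /proj_plus hodge_skM; apply/matrixP => i j; rewrite !mxE; ord4 i; ord4 j; rewrite /=; ring.
Qed.
Lemma projM (l : nat -> K) : proj_minus (skM l) = skM (fun n => 2^-1 * (l n - hodgeC l n)).
Proof.
rewrite /proj_minus hodge_skM; apply/matrixP => i j; rewrite !mxE; ord4 i; ord4 j; rewrite /=; ring.
Qed.

Lemma AF R (l x y : nat -> K) : sym_bilinear R ->
  act_form (skM l) R (skM x) (skM y) =
  - (\sum_(p < 6) \sum_(q < 6) brk l x p * y q * rS R p q)
  - \sum_(p < 6) \sum_(q < 6) x p * brk l y q * rS R p q.
Proof.
move=> hR; rewrite /act_form !actLE; try exact: skM_skew.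
by rewrite !comm_skM !R_coord.
Qed.

Definition s6 (f : nat -> K) : K := f 0%N + f 1%N + f 2%N + f 3%N + f 4%N + f 5%N.

Lemma sum6n (G : nat -> K) : \sum_(p < 6) G p = s6 G.
Proof. by rewrite !big_ord_recl big_ord0 /bump /addn /addn_rec /= /s6 addr0 !addrA. Qed.

Definition EE R (l : nat -> K) (a b : nat) : K :=
  - s6 (fun p => s6 (fun q => brk l (wN K a) p * wN K b q * rS R p q))
  - s6 (fun p => s6 (fun q => wN K a p * brk l (wN K b) q * rS R p q)).
Arguments EE : simpl never.

Lemma EE_lin R (x y : nat -> K) c a b :
  EE R (fun n => c * (x n + y n)) a b = c * (EE R x a b + EE R y a b).
Proof. rewrite /EE /s6 /=; ring. Qed.

Lemma EE_linN R (x y : nat -> K) c a b :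
  EE R (fun n => c * (x n - y n)) a b = c * (EE R x a b - EE R y a b).
Proof. rewrite /EE /s6 /=; ring. Qed.

Lemma ET R (l : nat -> K) (a b : nat) :
  (rr R 5 5 = rr R 0 0 /\ rr R 4 4 = rr R 1 1 /\ rr R 3 3 = rr R 2 2) /\
  (rr R 4 5 = - rr R 0 1 /\ rr R 3 5 = rr R 0 2 /\ rr R 3 4 = - rr R 1 2) /\
  (rr R 2 5 = rr R 0 3 /\ rr R 2 4 = - rr R 1 3 /\ rr R 1 5 = - rr R 0 4) ->
  (a < 6)%N -> (b < 6)%N ->
  EE R l a b =
   if (a < 3)%N && (b < 3)%N then EE R (hodgeC l) a b
   else if (3 <= a)%N && (3 <= b)%N then - EE R (hodgeC l) a b
   else 0.
Proof.
move=> [[p1 [p2 p3]] [[p4 [p5 p6]] [p7 [p8 p9]]]].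
(case: a => [|[|[|[|[|[|a]]]]]] //; case: b => [|[|[|[|[|[|b]]]]]] // _ _;
  rewrite /= /EE /s6 /rS /= p1 p2 p3 p4 p5 p6 p7 p8 p9; ring).
Qed.


Lemma orth1 (a b : 'I_6) : ip (XiN (1%:M : 'M[K]_4) a) (XiN 1%:M b) = (a == b)%:R.
Proof.
rewrite !XiN1 ipZ tt2 ip_skM.
case: a => [[|[|[|[|[|[|a]]]]]] Ha] //; case: b => [[|[|[|[|[|[|b]]]]]] Hb] //;
  expand; by field.
Qed.

Lemma part1 R (L : 'M[K]_4) : sym_bilinear R -> einstein R -> skewsym L ->
  normsq2 (act_form L R)
  = normsqP (act_form (proj_plus L) R) + normsqM (act_form (proj_minus L) R).
Proof.
move=> hR hE hL.
have piv := ric_eqs hR hE.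
rewrite (skewE hL) projP projM; set l := cA L.
have bA : forall m, bil (act_form (skM m) R).
  by move=> m; apply: bil_act; [exact: skM_skew | exact: bil_R].
have sX : forall a : 'I_6, skewsym (XiN (1%:M : 'M[K]_4) a).
  by move=> a; rewrite XiN1; apply: skewZ; exact: skM_skew.
have hX : forall (m : nat -> K) (a b : nat),
    act_form (skM m) R (XiN 1%:M a) (XiN 1%:M b) = 2^-1 * EE R m a b.
  move=> m a b; rewrite !XiN1 (@bilZZ _ (tt K) (tt K) _ _ (bA _) (skM_skew _) (skM_skew _)) tt2 AF //.
  congr (_ * _); rewrite /EE -!sum6n; congr (- _ - _); apply: eq_bigr => p _; by rewrite -sum6n.
rewrite -(normsq2_inv (bA l) sX orth1) /normsqP /normsqM.
under eq_bigr do under eq_bigr do rewrite hX.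
under [X in _ = X + _]eq_bigr do under eq_bigr do rewrite hX EE_lin.
under [X in _ = _ + X]eq_bigr do under eq_bigr do rewrite hX EE_linN.
rewrite !(big_ord_recl, big_ord0) /bump /addn /addn_rec /=.
rewrite !(@ET R l _ _ piv) //=.
by field.
Qed.

End P1b.


Theorem proposition2p6 (K : rcfType) (R : bivec K -> bivec K -> K) :
  sym_bilinear R -> bianchi R -> einstein R ->
  (forall L : bivec K, skewsym L ->
     normsq2 (act_form L R)
     = normsqP (act_form (proj_plus L) R) + normsqM (act_form (proj_minus L) R)) /\
  (forall (Q : 'M[K]_4), Q^T *m Q = 1%:M -> 0 < \det Q ->
   forall lam : 'I_6 -> K,
   (forall (a : 'I_6) (eta : bivec K), skewsym eta ->
        R (Xi Q a) eta = lam a * ip (Xi Q a) eta) ->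
   forall coef : 'I_6 -> K,
   let L := \sum_(a < 6) coef a *: Xi Q a in
   normsq2 (act_form L R)
     = 4 * \sum_(c < 6) coef c ^+ 2 * (lam (inord (partA c)) - lam (inord (partB c))) ^+ 2
   /\ (forall lmax lmin : K, is_max_eigenvalue R lmax -> is_min_eigenvalue R lmin ->
        normsq2 (act_form L R) <= 4 * (lmax - lmin) ^+ 2 * ip L L)).
Proof.
move=> hR _ hE; split.
  by move=> L hL; apply: part1.
move=> Q hQ _ lam hlam coef L.
exact: (part2 coef hR hQ hlam).
Qed.
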